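(* Let $M\in\mathbb R^{\mathbb N\times\mathbb N}$ be bounded on $\ell_2$ and elliptic (there is $C_{\rm ell}>0$ with $Mx\cdot x\ge C_{\rm ell}\|x\|_{\ell_2}^2$), let $n_1=1<n_2<\cdots$ be a block structure, let $M(i,j)=0$ for $|i-j|>b_0$, and $M\in\mathcal B(d,b_0)$ for a metric $d$ on $\mathbb N$. Let $M=LU$ be the block-$LU$-factorization with $L$ block-lower triangular, $U$ block-upper triangular, $L(i,i)=I$. Then for every $\varepsilon>0$ there exist $b\in\mathbb N$ and a block-lower triangular $L_\varepsilon^{-1}\in\mathcal B(d,b)$ with $L_\varepsilon^{-1}(i,i)=I$ and $L_\varepsilon^{-1}(i,j)=0$ for $|i-j|>b$, such that $\|L^{-1}-L_\varepsilon^{-1}\|_2\le\varepsilon$; $L_\varepsilon^{-1}$ is invertible and $\sup_{\varepsilon>0}(\|L_\varepsilon\|_2+\|L_\varepsilon^{-1}\|_2)<\infty$.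
   Context: $\|\cdot\|_2$ is the operator norm on $\ell_2$. $M\in\mathcal B(d,b)$ iff $M_{ij}=0$ whenever $d(i,j)>b$. Block notation: $M(i,j)=M|_{\{n_i,\dots,n_{i+1}-1\}\times\{n_j,\dots,n_{j+1}-1\}}$; block-lower triangular means $M(i,j)=0$ for $i<j$. *)

(* Defs.v *)
From HB Require Import structures.
From mathcomp Require Import all_boot all_order all_algebra.
From mathcomp Require Import reals.
Set Implicit Arguments. Unset Strict Implicit. Unset Printing Implicit Defensive.
Import Order.TTheory GRing.Theory Num.Theory.
Local Open Scope ring_scope.

(* Infinite real matrices indexed by nat x nat (0-based indices). *)
Definition mx (R : realType) := nat -> nat -> R.

Section Defs.
Variable R : realType.

Definition idmx : mx R := fun p q => (p == q)%:R.

Definition mxdiff (A B : mx R) : mx R := fun p q => A p q - B p q.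

(* ||A||_2 <= c : operator norm on l_2, tested on finitely supported vectors
   and finite truncations of the image (equivalent to the operator norm). *)
Definition opnorm_le (A : mx R) (c : R) : Prop :=
  0 <= c /\
  forall (m n : nat) (x : nat -> R),
    \sum_(i < m) (\sum_(j < n) A i j * x j) ^+ 2 <= c ^+ 2 * \sum_(j < n) x j ^+ 2.

Definition bounded (A : mx R) : Prop := exists c, opnorm_le A c.

(* Mx . x >= C ||x||^2 (on finitely supported x, dense in l_2). *)
Definition elliptic (M : mx R) : Prop :=
  exists C : R, 0 < C /\
  forall (n : nat) (x : nat -> R),
    C * \sum_(i < n) x i ^+ 2 <= \sum_(i < n) \sum_(j < n) M i j * x j * x i.

(* C = A B entrywise, the series sum_k A p k * B k q being (eventually constant,
   i.e. finite and) equal to C p q. *)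
Definition mxmul_eq (A B C : mx R) : Prop :=
  forall p q, exists N0, forall N, (N0 <= N)%N ->
    C p q = \sum_(k < N) A p k * B k q.

Definition is_metric (d : nat -> nat -> R) : Prop :=
  (forall i j, 0 <= d i j) /\ (forall i j, d i j = 0 <-> i = j) /\
  (forall i j, d i j = d j i) /\ (forall i j k, d i k <= d i j + d j k).

Definition inB (d : nat -> nat -> R) (b : nat) (A : mx R) : Prop :=
  forall i j, b%:R < d i j -> A i j = 0.
End Defs.

(* Block structure: block i = {nb i, ..., nb (i+1) - 1}, nb 0 = 0,
   nb strictly increasing (0-based version of n_1 = 1 < n_2 < ...). *)
Definition block_structure (nb : nat -> nat) : Prop :=
  nb 0 = 0%N /\ forall i, (nb i < nb i.+1)%N.

Definition inblk (nb : nat -> nat) (i p : nat) : bool := (nb i <= p < nb i.+1)%N.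

Section Blocks.
Variables (R : realType) (nb : nat -> nat).

Definition blk_lower (A : mx R) : Prop :=
  forall i j p q, (i < j)%N -> inblk nb i p -> inblk nb j q -> A p q = 0.

Definition blk_upper (A : mx R) : Prop :=
  forall i j p q, (j < i)%N -> inblk nb i p -> inblk nb j q -> A p q = 0.

Definition blk_unit_diag (A : mx R) : Prop :=
  forall i p q, inblk nb i p -> inblk nb i q -> A p q = (p == q)%:R.

Definition blk_band (b : nat) (A : mx R) : Prop :=
  forall i j p q, ((b < i - j) || (b < j - i))%N ->
    inblk nb i p -> inblk nb j q -> A p q = 0.
End Blocks.

(* Main.v *)
Require Import Defs.
From HB Require Import structures.
From mathcomp Require Import all_boot all_order all_algebra.
From mathcomp Require Import reals.
From mathcomp Require Import zify ring lra.
Import Order.TTheory GRing.Theory Num.Theory.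
Local Open Scope ring_scope.
Set Implicit Arguments. Unset Strict Implicit. Unset Printing Implicit Defensive.
Section Gen.
Variable R : realType.

Definition sq (n : nat) (x : nat -> R) := \sum_(j < n) x j ^+ 2.
Definition app (n : nat) (A : mx R) (x : nat -> R) : nat -> R :=
  fun p => \sum_(c < n) A p c * x c.

Lemma sq_ge0 n x : 0 <= sq n x.
Proof. by apply: sumr_ge0 => i _; apply: sqr_ge0. Qed.

Lemma sum_widen (n n' : nat) (F : nat -> R) : (n <= n')%N ->
  \sum_(i < n) F i = \sum_(i < n') (if (i < n)%N then F i else 0).
Proof. by move=> H; rewrite (big_ord_widen n' F H) big_mkcond. Qed.

Lemma sum_swap_range (n N : nat) (F : nat -> R) :
  \sum_(q < N) (if (q < n)%N then F q else 0) =
  \sum_(q < n) (if (q < N)%N then F q else 0).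
Proof.
rewrite (sum_widen (fun q => if (q < n)%N then F q else 0) (leq_addr n N)).
rewrite (sum_widen (fun q => if (q < N)%N then F q else 0) (leq_addl N n)).
apply: eq_bigr => i _; do 2 case: ifP => //.
Qed.

Lemma sum_delta n p (f : nat -> R) : (p < n)%N ->
  \sum_(c < n) (p == c)%:R * f c = f p.
Proof.
move=> Hp; rewrite (bigD1 (Ordinal Hp)) //= eqxx mul1r big1 ?addr0 // => c Hc.
case: eqP => [E|]; last by rewrite mul0r.
by exfalso; move/negP: Hc; apply; apply/eqP/val_inj.
Qed.

Lemma sum_delta' n p (f : nat -> R) : (p < n)%N ->
  \sum_(c < n) f c * ((c : nat) == p)%:R = f p.
Proof.
move=> Hp; rewrite -[RHS](sum_delta f Hp); apply: eq_bigr => c _.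
by rewrite mulrC eq_sym.
Qed.

Lemma eq_app n A x y p : (forall c, (c < n)%N -> x c = y c) -> app n A x p = app n A y p.
Proof. by move=> H; apply: eq_bigr => c _; rewrite H. Qed.

Lemma eq_sq n x y : (forall c, (c < n)%N -> x c = y c) -> sq n x = sq n y.
Proof. by move=> H; apply: eq_bigr => c _; rewrite H. Qed.

Lemma app_lin n A a x y p :
  app n A (fun q => a * x q + y q) p = a * app n A x p + app n A y p.
Proof.
rewrite /app mulr_sumr -big_split /=; apply: eq_bigr => c _; ring.
Qed.

Lemma pair_trick a b (P Q : nat -> nat -> R) :
  (forall i j, 2 * P i j <= Q i j + Q j i) ->
  \sum_(a <= i < b) \sum_(a <= j < b) P i j <= \sum_(a <= i < b) \sum_(a <= j < b) Q i j.
Proof.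
move=> H.
have E : \sum_(a <= i < b) \sum_(a <= j < b) (Q i j + Q j i) =
         2 * \sum_(a <= i < b) \sum_(a <= j < b) Q i j.
  have -> : \sum_(a <= i < b) \sum_(a <= j < b) (Q i j + Q j i) =
     \sum_(a <= i < b) \sum_(a <= j < b) Q i j + \sum_(a <= i < b) \sum_(a <= j < b) Q j i.
    rewrite -big_split /=; apply: eq_bigr => i _; by rewrite big_split.
  rewrite [X in _ + X]exchange_big_nat; ring.
rewrite -(@ler_pM2l _ 2) // -E mulr_sumr; apply: ler_sum => i _.
rewrite mulr_sumr; apply: ler_sum => j _; exact: H.
Qed.

Lemma cs_w a b (x w : nat -> R) : (forall i, 0 < w i) ->
  (\sum_(a <= i < b) x i) ^+ 2 <=
  (\sum_(a <= i < b) w i) * \sum_(a <= i < b) (x i ^+ 2 / w i).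
Proof.
move=> Hw.
have -> : (\sum_(a <= i < b) x i) ^+ 2 = \sum_(a <= i < b) \sum_(a <= j < b) x i * x j.
  rewrite expr2 mulr_suml; apply: eq_bigr => i _; by rewrite mulr_sumr.
have -> : (\sum_(a <= i < b) w i) * \sum_(a <= i < b) (x i ^+ 2 / w i) =
   \sum_(a <= i < b) \sum_(a <= j < b) (w i * (x j ^+ 2 / w j)).
  rewrite mulr_suml; apply: eq_bigr => i _; by rewrite mulr_sumr.
apply: pair_trick => i j.
have wi := Hw i; have wj := Hw j.
have E : w i * (x j ^+ 2 / w j) + w j * (x i ^+ 2 / w i) - 2 * (x i * x j)
   = (w i * x j - w j * x i) ^+ 2 / (w i * w j).
  by field; apply/andP; split; apply: lt0r_neq0.
rewrite -subr_ge0 E; apply: divr_ge0; first exact: sqr_ge0.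
by apply: mulr_ge0; apply: ltW.
Qed.

Lemma cs_dot n (x y : nat -> R) :
  (\sum_(i < n) x i * y i) ^+ 2 <= sq n x * sq n y.
Proof.
rewrite /sq -(big_mkord xpredT (fun i => x i * y i)) -(big_mkord xpredT (fun i => x i ^+ 2)).
rewrite -(big_mkord xpredT (fun i => y i ^+ 2)).
have -> : (\sum_(0 <= i < n) x i * y i) ^+ 2 =
  \sum_(0 <= i < n) \sum_(0 <= j < n) (x i * y i) * (x j * y j).
  rewrite expr2 mulr_suml; apply: eq_bigr => i _; by rewrite mulr_sumr.
have -> : (\sum_(0 <= i < n) x i ^+ 2) * \sum_(0 <= i < n) y i ^+ 2 =
   \sum_(0 <= i < n) \sum_(0 <= j < n) (x i ^+ 2 * y j ^+ 2).
  rewrite mulr_suml; apply: eq_bigr => i _; by rewrite mulr_sumr.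
apply: pair_trick => i j.
rewrite -subr_ge0.
have -> : x i ^+ 2 * y j ^+ 2 + x j ^+ 2 * y i ^+ 2 - 2 * (x i * y i * (x j * y j))
  = (x i * y j - x j * y i) ^+ 2 by ring.
exact: sqr_ge0.
Qed.

Lemma sq_add2 n x y : sq n (fun p => x p + y p) <= 2 * sq n x + 2 * sq n y.
Proof.
rewrite /sq !mulr_sumr -big_split /=; apply: ler_sum => i _.
rewrite -subr_ge0.
have -> : 2 * x i ^+ 2 + 2 * y i ^+ 2 - (x i + y i) ^+ 2 = (x i - y i) ^+ 2 by ring.
exact: sqr_ge0.
Qed.

Lemma geom_tail (s : R) k K : 0 <= s < 1 ->
  \sum_(k <= m < K) s ^+ m <= s ^+ k / (1 - s).
Proof.
move=> /andP [s0 s1].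
have H1 : 0 < 1 - s by rewrite subr_gt0.
rewrite ler_pdivlMr //.
case: (leqP K k) => HK.
  by rewrite big_geq // mul0r exprn_ge0.
have -> : K = (k + (K - k))%N by lia.
case: (K - k)%N => [|j]; first by rewrite addn0 big_geq // mul0r exprn_ge0.
rewrite addnS big_nat_recr /=; last by lia.
suff : (\sum_(k <= i < k + j) s ^+ i) * (1 - s) = s ^+ k - s ^+ (k + j).
  move=> E; rewrite mulrDl E.
  have -> : s ^+ k - s ^+ (k + j) + s ^+ (k + j) * (1 - s) = s ^+ k - s ^+ (k + j).+1.
    rewrite [s ^+ (k + j).+1]exprS; ring.
  by rewrite lerBlDr lerDl exprn_ge0.
elim: j => [|j IH]; first by rewrite addn0 big_geq // mul0r subrr.
rewrite addnS big_nat_recr /=; last by lia.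
by rewrite mulrDl IH [s ^+ (k + j).+1]exprS; ring.
Qed.

Lemma lin_geo (t : R) m : 0 <= t < 1 -> (m.+1)%:R * t ^+ m <= 1 / (1 - t).
Proof.
move=> /andP [t0 t1].
have H1 : 0 < 1 - t by rewrite subr_gt0.
rewrite ler_pdivlMr //.
have E : \sum_(0 <= i < m.+1) t ^+ i * (1 - t) = 1 - t ^+ m.+1.
  elim: m => [|m IH]; first by rewrite big_nat1 expr0 mul1r expr1.
  by rewrite big_nat_recr //= IH !exprS; ring.
have L : (m.+1)%:R * t ^+ m <= \sum_(0 <= i < m.+1) t ^+ i.
  rewrite -[X in X%:R]card_ord -[m.+1](subn0) -sum1_card.
  rewrite (big_mkord xpredT) natr_sum mulr_suml; apply: ler_sum => i _.
  rewrite mul1r; apply: ler_wiXn2l => //; first exact: ltW.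
  by rewrite -ltnS.
apply: (le_trans (ler_wpM2r (ltW H1) L)); rewrite mulr_suml E.
by rewrite lerBlDr lerDl exprn_ge0.
Qed.

Lemma small_pow (s : R) (e : R) : 0 <= s < 1 -> 0 < e -> exists k : nat, s ^+ k <= e.
Proof.
move=> /andP [s0 s1] e0.
case: (eqVneq s 0) => [->|sn0]; first by exists 1%N; rewrite expr1 ltW.
have sp : 0 < s by rewrite lt_def sn0 s0.
set h := s^-1 - 1.
have hp : 0 < h by rewrite subr_gt0 invf_gt1.
have Hb : forall k : nat, 1 + k%:R * h <= (s^-1) ^+ k.
  elim=> [|k IH]; first by rewrite mul0r addr0 expr0.
  rewrite exprS.
  have E : s^-1 = 1 + h by rewrite /h; ring.
  apply: le_trans (ler_wpM2l _ IH); last by rewrite invr_ge0.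
  rewrite E -natr1 mulrDl mul1r.
  rewrite -subr_ge0; have -> : (1 + h) * (1 + k%:R * h) - (1 + (k%:R * h + h)) = k%:R * h * h by ring.
  by apply: mulr_ge0; [apply: mulr_ge0; [exact: ler0n | exact: ltW] | exact: ltW].
have e1 : 0 <= (e * h)^-1 by rewrite invr_ge0 mulr_ge0 // ltW.
exists (Num.Def.archi_bound (e * h)^-1).
set k := Num.Def.archi_bound _.
have Hk : (e * h)^-1 < k%:R by exact: archi_boundP.
have pk : 0 < (s^-1) ^+ k by apply: exprn_gt0; rewrite invr_gt0.
have H : e^-1 <= (s^-1) ^+ k.
  apply: le_trans (Hb k).
  have : e^-1 < k%:R * h.
    move: Hk; rewrite invfM -ltr_pdivrMr //.
  move=> /ltW H; apply: le_trans H _; by rewrite lerDr.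
rewrite -(ler_pM2r pk) -exprMn mulfV ?expr1n; last by apply: lt0r_neq0.
rewrite -(ler_pM2l e0) in H; by rewrite mulfV ?lt0r_neq0 in H.
Qed.
End Gen.

Section Blk.
Variable nb : nat -> nat.
Hypothesis Hnb : block_structure nb.

Lemma nb_mono i j : (i < j)%N -> (nb i < nb j)%N.
Proof.
case: Hnb => _ H; elim: j => // j IH; rewrite ltnS leq_eqVlt => /orP [/eqP ->|/IH]; first exact: H.
by move=> h; apply: ltn_trans h (H j).
Qed.

Lemma nb_le i j : (i <= j)%N -> (nb i <= nb j)%N.
Proof. rewrite leq_eqVlt => /orP [/eqP ->//|/nb_mono]; exact: ltnW. Qed.

Lemma nb_ge i : (i <= nb i)%N.
Proof.
case: Hnb => H0 H; elim: i => // i IH; apply: leq_ltn_trans IH (H i).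
Qed.

Lemma blk_ex p : exists i, (p < nb i.+1)%N.
Proof. exists p; apply: leq_trans (nb_ge p.+1); done. Qed.

Definition blk p := ex_minn (blk_ex p).

Lemma blkP p : (nb (blk p) <= p < nb (blk p).+1)%N.
Proof.
rewrite /blk; case: ex_minnP => i Hi Hmin; rewrite Hi andbT.
case: i Hi Hmin => [|i] Hi Hmin; first by case: Hnb => ->.
rewrite leqNgt; apply/negP => /Hmin; lia.
Qed.

Lemma blk_uniq i p : (nb i <= p < nb i.+1)%N -> blk p = i.
Proof.
move=> /andP [H1 H2]; case/andP: (blkP p) => H3 H4.
case: (ltngtP (blk p) i) => // H.
- have := nb_le H; lia.
- have := nb_le H; lia.
Qed.

Lemma ltn_blk q i : (q < nb i)%N = (blk q < i)%N.
Proof.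
case/andP: (blkP q) => H1 H2.
case: (ltnP (blk q) i) => H.
- by apply: leq_trans H2 (nb_le H).
- by apply/negbTE; rewrite -leqNgt; apply: leq_trans (nb_le H) H1.
Qed.

Lemma blk_le p : (blk p <= p)%N.
Proof. case/andP: (blkP p) => H1 _; exact: leq_trans (nb_ge _) H1. Qed.

Lemma blk_mono p q : (p <= q)%N -> (blk p <= blk q)%N.
Proof.
move=> H; rewrite leqNgt; apply/negP => H'.
case/andP: (blkP q) => _ H2; case/andP: (blkP p) => H3 _.
have := nb_le H'; lia.
Qed.

Lemma inblkE i p : inblk nb i p = (blk p == i).
Proof.
apply/idP/eqP => [H|<-]; first exact: blk_uniq.
exact: blkP.
Qed.

Lemma blk_lt p q : (blk p < blk q)%N -> (p < q)%N.
Proof. move=> H; rewrite ltnNge; apply/negP => /blk_mono; lia. Qed.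

End Blk.

Section Main.
Variable R : realType.
Variable nb : nat -> nat.
Hypothesis Hnb : block_structure nb.
Variables (M : mx R) (d : nat -> nat -> R) (b0 : nat) (Lam C : R).
Hypothesis HC : 0 < C.
Hypothesis HCL : C < Lam.
Hypothesis Hbnd : forall (m n : nat) (x : nat -> R),
    \sum_(i < m) (\sum_(j < n) M i j * x j) ^+ 2 <= Lam ^+ 2 * \sum_(j < n) x j ^+ 2.
Hypothesis Hell : forall (n : nat) (x : nat -> R),
    C * \sum_(i < n) x i ^+ 2 <= \sum_(i < n) \sum_(j < n) M i j * x j * x i.
Hypothesis HMb : forall p q, ((b0 < blk Hnb p - blk Hnb q) || (b0 < blk Hnb q - blk Hnb p))%N -> M p q = 0.
Hypothesis HMd : forall p q, b0%:R < d p q -> M p q = 0.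
Hypothesis Hd0 : forall p, d p p = 0.
Hypothesis Hdtri : forall i j k, d i k <= d i j + d j k.

Local Notation blk := (blk Hnb).
Local Notation ltn_blk := (ltn_blk Hnb).
Local Notation nb_le := (nb_le Hnb).
Local Notation blk_uniq := (blk_uniq Hnb).
Local Notation blk_mono := (blk_mono Hnb).
Local Notation blk_lt := (blk_lt Hnb).
Local Notation blk_le := (blk_le Hnb).

Lemma Lam_gt0 : 0 < Lam. Proof. exact: lt_trans HCL. Qed.

Definition al := C / Lam ^+ 2.
Definition rho := 1 - C ^+ 2 / Lam ^+ 2.

Lemma al_ge0 : 0 <= al.
Proof. rewrite /al divr_ge0 //; [exact: ltW | apply: exprn_ge0; exact: ltW Lam_gt0]. Qed.

Lemma rho_bounds : 0 <= rho < 1.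
Proof.
have L0 := Lam_gt0.
have L2 : 0 < Lam ^+ 2 by rewrite exprn_gt0.
rewrite /rho; apply/andP; split.
- rewrite subr_ge0 ler_pdivrMr // mul1r; rewrite -subr_ge0.
  have -> : Lam ^+ 2 - C ^+ 2 = (Lam - C) * (Lam + C) by ring.
  apply: mulr_ge0; [rewrite subr_ge0 ltW // | rewrite addr_ge0 // ltW //].
- rewrite ltrBlDr ltrDl divr_gt0 // exprn_gt0 //.
Qed.

Lemma sq_M n x : sq n (app n M x) <= Lam ^+ 2 * sq n x.
Proof. exact: Hbnd. Qed.

Lemma ell_app n x : C * sq n x <= \sum_(i < n) app n M x i * x i.
Proof.
apply: le_trans (Hell n x) _; rewrite le_eqVlt; apply/orP; left; apply/eqP.
by apply: eq_bigr => i _; rewrite /app mulr_suml.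
Qed.

Definition Bm : mx R := fun p q => (p == q)%:R - al * M p q.

Fixpoint Bp (n m : nat) : mx R :=
  if m is m'.+1 then fun p q => \sum_(c < n) Bp n m' p c * Bm c q else @idmx R.

Lemma app_Bm n x p : (p < n)%N -> app n Bm x p = x p - al * app n M x p.
Proof.
move=> Hp; rewrite /app /Bm.
under eq_bigr => c _ do rewrite mulrBl.
by rewrite sumrB sum_delta // mulr_sumr; congr (_ - _); apply: eq_bigr => c _; rewrite mulrA.
Qed.

Lemma app_BpS n m x p : app n (Bp n m.+1) x p = app n (Bp n m) (app n Bm x) p.
Proof.
rewrite /app /=.
under eq_bigr => q _ do rewrite mulr_suml.
rewrite exchange_big /=; apply: eq_bigr => c _.
by rewrite mulr_sumr; apply: eq_bigr => q _; rewrite mulrA.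
Qed.

Lemma app_Bp0 n x p : (p < n)%N -> app n (Bp n 0) x p = x p.
Proof. by move=> Hp; rewrite /app /= /idmx sum_delta. Qed.

Lemma sq_Bm n x : sq n (app n Bm x) <= rho * sq n x.
Proof.
have L0 := Lam_gt0.
have L2 : 0 < Lam ^+ 2 by rewrite exprn_gt0.
rewrite (eq_sq (y := fun p => x p - al * app n M x p)); last by move=> c Hc; rewrite app_Bm.
have E : sq n (fun p => x p - al * app n M x p) =
   sq n x - 2 * al * \sum_(i < n) app n M x i * x i + al ^+ 2 * sq n (app n M x).
  rewrite /sq mulr_sumr -sumrB mulr_sumr -big_split /=; apply: eq_bigr => i _; ring.
rewrite E.
have H1 := ell_app n x.
have H2 := sq_M n x.
have a0 := al_ge0.
have h1 : 2 * al * (C * sq n x) <= 2 * al * \sum_(i < n) app n M x i * x i.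
  by apply: ler_wpM2l => //; rewrite mulr_ge0.
have h2 : al ^+ 2 * sq n (app n M x) <= al ^+ 2 * (Lam ^+ 2 * sq n x).
  by apply: ler_wpM2l => //; rewrite exprn_ge0.
have -> : rho * sq n x = sq n x - 2 * al * (C * sq n x) + al ^+ 2 * (Lam ^+ 2 * sq n x).
  rewrite /rho /al; field; exact: lt0r_neq0.
lra.
Qed.

Lemma sq_Bp n m x : sq n (app n (Bp n m) x) <= rho ^+ m * sq n x.
Proof.
elim: m x => [|m IH] x.
  by rewrite expr0 mul1r (eq_sq (y := x)) // => c Hc; rewrite app_Bp0.
have -> : sq n (app n (Bp n m.+1) x) = sq n (app n (Bp n m) (app n Bm x)).
  by apply: eq_sq => c _; rewrite app_BpS.
apply: le_trans (IH _) _; rewrite exprSr -mulrA; apply: ler_wpM2l.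
  by apply: exprn_ge0; case/andP: rho_bounds.
exact: sq_Bm.
Qed.

Lemma Bp_ident n (y w : nat -> R) :
  (forall p, (p < n)%N -> app n M w p = y p) ->
  forall K c, (c < n)%N ->
   w c = al * \sum_(m < K) app n (Bp n m) y c + app n (Bp n K) w c.
Proof.
move=> Hw; elim=> [|K IH] c Hc; first by rewrite big_ord0 mulr0 add0r app_Bp0.
rewrite IH // big_ord_recr /= mulrDr -addrA; congr (_ + _).
rewrite (@eq_app _ n (Bp n K) w (fun q => al * y q + app n Bm w q) c); last first.
  by move=> q Hq; rewrite app_Bm // Hw //; ring.
by rewrite app_lin app_BpS.
Qed.

Lemma Bp_blk n m c q :
  ((blk q + m * b0 < blk c) || (blk c + m * b0 < blk q))%N -> Bp n m c q = 0.
Proof.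
elim: m q => [|m IH] q H /=.
  rewrite /idmx; case: eqP => // E; rewrite E in H; lia.
apply: big1 => c' _.
case H1 : ((blk c' + m * b0 < blk c) || (blk c + m * b0 < blk c'))%N.
  by rewrite IH // mul0r.
rewrite /Bm HMb ?mulr0 ?subr0.
  case: eqP => [E|]; last by rewrite mulr0.
  rewrite E in H1; move/negbT: H1; rewrite negb_or -!leqNgt => /andP[h1 h2].
  exfalso; move: H; rewrite mulSn; lia.
move/negbT: H1; rewrite negb_or -!leqNgt => /andP[h1 h2].
move: H; rewrite mulSn; lia.
Qed.

Lemma Bp_d n m c q : (m * b0)%:R < d c q -> Bp n m c q = 0.
Proof.
elim: m q => [|m IH] q H /=.
  rewrite /idmx; case: eqP => // E; rewrite E Hd0 in H; by rewrite mul0n ltxx in H.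
apply: big1 => c' _.
case H1 : ((m * b0)%:R < d c c').
  by rewrite IH // mul0r.
move/negbT: H1; rewrite -leNgt => H1.
rewrite /Bm.
case: (eqVneq (c' : nat) q) => [E|Ne].
  rewrite E in H1; exfalso; move: H; rewrite ltNge => /negP; apply.
  apply: le_trans H1 _; rewrite ler_nat; apply: leq_mul => //.
rewrite HMd ?mulr0 ?subr0 /=; first by rewrite mulr0.
rewrite ltNge; apply/negP => H2.
move: H; rewrite ltNge => /negP; apply.
apply: le_trans (Hdtri c c' q) _.
by rewrite mulSn natrD addrC lerD.
Qed.

Definition Mn n : 'M[R]_n := \matrix_(i, j) M i j.

Lemma Mn_unit n : Mn n \in unitmx.
Proof.
rewrite -row_free_unit; apply/inj_row_free => v Hv.
pose x := fun q : nat => \sum_(k < n) (q == k)%:R * v 0 k.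
have xk : forall k : 'I_n, x k = v 0 k.
  move=> k; rewrite /x (bigD1 k) //= eqxx mul1r big1 ?addr0 // => j Hj.
  by rewrite (_ : ((k : nat) == j) = false) ?mul0r //; apply/negbTE; apply: contra Hj => /eqP E; apply/eqP/val_inj.
have H := Hell n x.
have E0 : \sum_(i < n) \sum_(j < n) M i j * x j * x i = 0.
  rewrite exchange_big /=; apply: big1 => j _.
  have : (v *m Mn n) 0 j = 0 by rewrite Hv mxE.
  rewrite mxE => Hj.
  have -> : \sum_(i < n) M i j * x j * x i = x j * \sum_(j0 < n) v 0 j0 * Mn n j0 j.
    rewrite mulr_sumr; apply: eq_bigr => i _; by rewrite mxE !xk; ring.
  by rewrite Hj mulr0.
rewrite E0 in H.
have S0 : \sum_(i < n) x i ^+ 2 = 0.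
  apply/eqP; rewrite eq_le sumr_ge0 ?andbT; last by move=> i _; apply: sqr_ge0.
  by rewrite -(ler_pM2l HC) mulr0.
apply/rowP => k; rewrite mxE -xk.
move/eqP: S0; rewrite psumr_eq0; last by move=> i _; apply: sqr_ge0.
by move=> /allP /(_ k (mem_index_enum k)) /=; rewrite sqrf_eq0 => /eqP.
Qed.

Definition G n (p q : nat) : R :=
  match (insub p : option 'I_n), (insub q : option 'I_n) with
  | Some i, Some j => invmx (Mn n) i j
  | _, _ => 0
  end.

Lemma G_ord n (i j : 'I_n) : G n i j = invmx (Mn n) i j.
Proof. by rewrite /G !valK. Qed.

Lemma MG n p q : (p < n)%N -> (q < n)%N ->
  \sum_(k < n) M p k * G n k q = (p == q)%:R.
Proof.
move=> Hp Hq.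
have := congr1 (fun A : 'M[R]_n => A (Ordinal Hp) (Ordinal Hq)) (mulmxV (Mn_unit n)).
rewrite !mxE /= => <-; apply: eq_bigr => k _.
by rewrite mxE -(G_ord k (Ordinal Hq)).
Qed.

Lemma GM n p q : (p < n)%N -> (q < n)%N ->
  \sum_(k < n) G n p k * M k q = (p == q)%:R.
Proof.
move=> Hp Hq.
have := congr1 (fun A : 'M[R]_n => A (Ordinal Hp) (Ordinal Hq)) (mulVmx (Mn_unit n)).
rewrite !mxE /= => <-; apply: eq_bigr => k _.
by rewrite mxE -(G_ord (Ordinal Hp) k).
Qed.

Lemma MGapp n y p : (p < n)%N -> app n M (app n (G n) y) p = y p.
Proof.
move=> Hp; rewrite /app.
under eq_bigr => k _ do rewrite mulr_sumr.
rewrite exchange_big /= (eq_bigr (fun q : 'I_n => (p == q)%:R * y q)) ?sum_delta // => q _.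
rewrite -(@MG n p q Hp (ltn_ord q)) mulr_suml; apply: eq_bigr => k _; by rewrite mulrA.
Qed.

Lemma sq_G n y : C ^+ 2 * sq n (app n (G n) y) <= sq n y.
Proof.
set w := app n (G n) y.
have H1 : C * sq n w <= \sum_(i < n) y i * w i.
  apply: le_trans (ell_app n w) _; rewrite le_eqVlt; apply/orP; left; apply/eqP.
  by apply: eq_bigr => i _; rewrite /w MGapp.
have H2 := cs_dot n y w.
have w0 := sq_ge0 n w.
have y0 := sq_ge0 n y.
have H3 : (C * sq n w) ^+ 2 <= sq n y * sq n w.
  apply: le_trans H2; have S0 : 0 <= C * sq n w by apply: mulr_ge0 => //; exact: ltW.
  by rewrite expr2 [X in _ <= X]expr2; apply: ler_pM.
case: (eqVneq (sq n w) 0) => [->|wn0]; first by rewrite mulr0.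
have wp : 0 < sq n w by rewrite lt_def wn0 w0.
rewrite -(ler_pM2r wp); move: H3; rewrite exprMn expr2 mulrA => H3; exact: H3.
Qed.

Lemma sum_mul_swap n1 n2 (a : nat -> R) (B : nat -> nat -> R) (c : nat -> R) :
  \sum_(k < n1) a k * (\sum_(l < n2) B k l * c l) =
  \sum_(l < n2) (\sum_(k < n1) a k * B k l) * c l.
Proof.
under eq_bigr => k _ do rewrite mulr_sumr.
rewrite exchange_big /=; apply: eq_bigr => l _; rewrite mulr_suml.
by apply: eq_bigr => k _; rewrite mulrA.
Qed.

Variables (L U T : mx R).
Hypothesis HLlow : blk_lower nb L.
Hypothesis HLdiag : blk_unit_diag nb L.
Hypothesis HUup : blk_upper nb U.
Hypothesis HLU : mxmul_eq L U M.
Hypothesis HTlow : blk_lower nb T.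
Hypothesis HLT : mxmul_eq L T (@idmx R).
Hypothesis HTL : mxmul_eq T L (@idmx R).

Lemma low' (A : mx R) : blk_lower nb A -> forall p q, (blk p < blk q)%N -> A p q = 0.
Proof. move=> H p q h; exact: (H _ _ _ _ h (blkP Hnb p) (blkP Hnb q)). Qed.

Lemma Ldiag' p q : blk p = blk q -> L p q = (p == q)%:R.
Proof. move=> h; apply: (HLdiag (blkP Hnb p)); rewrite h; exact: blkP. Qed.

Lemma Uup' p q : (blk q < blk p)%N -> U p q = 0.
Proof. move=> h; exact: (HUup h (blkP Hnb p) (blkP Hnb q)). Qed.

Lemma far_blk p k N : (nb (blk p).+1 <= N)%N -> (N <= k)%N -> (blk p < blk k)%N.
Proof.
move=> h1 h2; have : ~~ (k < nb (blk p).+1)%N by rewrite -leqNgt; exact: leq_trans h1 h2.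
by rewrite ltn_blk -leqNgt.
Qed.

Lemma mxsec (A B Cm : mx R) N p q : mxmul_eq A B Cm ->
  (forall k, (N <= k)%N -> A p k = 0) -> \sum_(k < N) A p k * B k q = Cm p q.
Proof.
move=> H HA; case: (H p q) => N0 HN0.
rewrite (HN0 (maxn N0 N)) ?leq_maxl // (sum_widen (fun k => A p k * B k q) (leq_maxr N0 N)).
apply: eq_bigr => k _; case: ifP => // /negbT; rewrite -leqNgt => /HA ->; by rewrite mul0r.
Qed.

Lemma Tdiag p q : blk p = blk q -> T p q = (p == q)%:R.
Proof.
move=> h.
have := @mxsec T L (@idmx R) (nb (blk p).+1) p q HTL.
rewrite /idmx => <-; last first.
  by move=> k hk; apply: (low' HTlow); apply: far_blk hk.
rewrite (eq_bigr (fun k : 'I_(nb (blk p).+1) => T p k * ((k : nat) == q)%:R)).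
  rewrite (sum_delta' (fun k => T p k)) //; case/andP: (blkP Hnb q) => _; by rewrite h.
move=> k _; congr (_ * _).
have hk : (blk k < (blk p).+1)%N by rewrite -ltn_blk.
case: (ltngtP (blk k) (blk q)) => hkq.
- rewrite (low' HLlow hkq); case: eqP => // E; by rewrite E ltnn in hkq.
- exfalso; lia.
- exact: Ldiag'.
Qed.

Lemma ltri (A : mx R) : blk_lower nb A -> (forall p q, blk p = blk q -> A p q = (p == q)%:R) ->
  forall p q, (p < q)%N -> A p q = 0.
Proof.
move=> H1 H2 p q h; have := blk_mono (ltnW h); rewrite leq_eqVlt => /orP [/eqP E|E].
- rewrite H2 //; case: eqP => // E'; by rewrite E' ltnn in h.
- exact: (low' H1).
Qed.

Lemma TMU k c N : (nb (blk k).+1 <= N)%N -> \sum_(k' < N) T k k' * M k' c = U k c.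
Proof.
move=> hN.
have E1 : \sum_(k' < N) T k k' * M k' c =
          \sum_(k' < N) T k k' * \sum_(k'' < N) L k' k'' * U k'' c.
  apply: eq_bigr => k' _; case: (ltnP (blk k) (blk k')) => h.
    by rewrite (low' HTlow h) !mul0r.
  congr (_ * _); rewrite (mxsec _ HLU) // => k'' hk''; apply: (low' HLlow); apply: far_blk hk''.
  apply: leq_trans hN; apply: nb_le; by rewrite ltnS.
rewrite E1 (sum_mul_swap _ _ (fun k' => T k k') (fun k' k'' => L k' k'') (fun k'' => U k'' c)).
rewrite (eq_bigr (fun k'' : 'I_N => (k == k'')%:R * U k'' c)).
  rewrite (sum_delta (fun k'' => U k'' c)) //; apply: leq_trans hN; by case/andP: (blkP Hnb k).
move=> k'' _; rewrite (mxsec _ HTL) // => k' hk'; apply: (low' HTlow); exact: far_blk hk'.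
Qed.

Lemma TF p q : (blk q < blk p)%N ->
  T p q = - \sum_(c < nb (blk p)) M p c * G (nb (blk p)) c q.
Proof.
move=> hq; set i := blk p; set n := nb i; set N := nb i.+1.
have Hp := blkP Hnb p; rewrite -/i in Hp; case/andP: Hp => Hp1 Hp2.
have H1 : forall c, (c < n)%N -> \sum_(k < n) T p k * M k c = - M p c.
  move=> c hc; apply/eqP; rewrite -addr_eq0; apply/eqP.
  have hcb : (blk c < blk p)%N by rewrite -ltn_blk.
  transitivity (\sum_(k < N) T p k * M k c); last by rewrite TMU // Uup'.
  rewrite (sum_widen (fun k => T p k * M k c) (nb_le (leqnSn i))) -(sum_delta (fun k => M k c) Hp2).
  rewrite -big_split /=; apply: eq_bigr => k _.
  case: ifP => hk.
    rewrite (_ : (p == k) = false) ?mul0r ?addr0 //; apply/negbTE; apply/eqP => E.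
    move: hk Hp1; rewrite -E /n; lia.
  rewrite add0r; case: (ltnP k N) => hkN.
    rewrite Tdiag //; apply/esym/blk_uniq; by rewrite hkN andbT leqNgt hk.
  rewrite (low' HTlow (far_blk (leqnn _) hkN)) mul0r.
  rewrite (_ : (p == k) = false) ?mul0r //; apply/negbTE; apply/eqP => E.
  move: hkN Hp2; rewrite -E /N; lia.
have hqn : (q < n)%N by rewrite ltn_blk.
rewrite -(sum_delta' (fun k => T p k) hqn).
rewrite (eq_bigr (fun k : 'I_n => T p k * \sum_(c < n) M k c * G n c q)); last first.
  by move=> k _; rewrite MG.
rewrite (sum_mul_swap _ _ (fun k => T p k) (fun k c => M k c) (fun c => G n c q)) -sumrN; apply: eq_bigr => c _; by rewrite H1 // mulNr.
Qed.

Lemma LF p q : (blk q < blk p)%N ->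
  L p q = \sum_(c < nb (blk q).+1) M p c * G (nb (blk q).+1) c q.
Proof.
move=> hq; set j := blk q; set n := nb j.+1; set i := blk p; set N := nb i.+1.
have hnN : (n <= N)%N by apply: nb_le; rewrite ltnS ltnW.
have H1 : forall c, (c < n)%N -> M p c = \sum_(k < n) L p k * U k c.
  move=> c hc.
  rewrite -(@mxsec L U M N p c HLU); last by move=> k hk; apply: (low' HLlow); exact: far_blk hk.
  rewrite (sum_widen (fun k => L p k * U k c) hnN); apply: eq_bigr => k _.
  case: ifP => // /negbT; rewrite -leqNgt => hk.
  rewrite Uup' ?mulr0 //; have : (blk c < j.+1)%N by rewrite -ltn_blk.
  have := far_blk (leqnn n) hk; rewrite /j; lia.
have H2 : forall k r, (k < n)%N -> (r < n)%N -> \sum_(c < n) U k c * G n c r = T k r.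
  move=> k r hk hr.
  have hkb : (blk k < j.+1)%N by rewrite -ltn_blk.
  rewrite (eq_bigr (fun c : 'I_n => (\sum_(k' < n) T k k' * M k' c) * G n c r)); last first.
    by move=> c _; rewrite TMU //; apply: nb_le.
  rewrite -(sum_mul_swap _ _ (fun k' => T k k') (fun k' c => M k' c) (fun c => G n c r)).
  rewrite (eq_bigr (fun k' : 'I_n => T k k' * ((k' : nat) == r)%:R)).
    by rewrite (sum_delta' (fun k' => T k k')).
  by move=> k' _; rewrite MG.
have hqn : (q < n)%N by case/andP: (blkP Hnb q).
rewrite (eq_bigr (fun c : 'I_n => (\sum_(k < n) L p k * U k c) * G n c q)); last first.
  by move=> c _; rewrite -H1.
rewrite -(sum_mul_swap _ _ (fun k => L p k) (fun k c => U k c) (fun c => G n c q)).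
rewrite (eq_bigr (fun k : 'I_n => L p k * ((k : nat) == q)%:R)).
  by rewrite (sum_delta' (fun k => L p k)).
move=> k _; rewrite H2 //; congr (_ * _).
have hkb : (blk k < j.+1)%N by rewrite -ltn_blk.
case: (ltngtP (blk k) j) => h.
- rewrite (low' HTlow h); case: eqP => // E; by rewrite E ltnn in h.
- exfalso; lia.
- exact: Tdiag.
Qed.

Lemma GL0 N n (z : nat -> nat -> R) :
  \sum_(p < N) (\sum_(c < n) M p c * z (blk p) c) ^+ 2 <= Lam ^+ 2 * \sum_(i < N) sq n (z i).
Proof.
pose F p i := (\sum_(c < n) M p c * z i c) ^+ 2.
have E : \sum_(p < N) (\sum_(c < n) M p c * z (blk p) c) ^+ 2 =
         \sum_(p < N) \sum_(i < N) (blk p == i)%:R * F p i.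
  apply: eq_bigr => p _; rewrite (sum_delta (F p)) //.
  exact: leq_ltn_trans (blk_le p) (ltn_ord p).
rewrite E exchange_big /= mulr_sumr; apply: ler_sum => i _.
apply: le_trans (Hbnd N n (z i)); apply: ler_sum => p _.
rewrite /F; case: eqP => _; rewrite ?mul1r ?mul0r //; exact: sqr_ge0.
Qed.

Lemma count_win N a w :
  \sum_(i < N) (if (a <= i <= a + w)%N then (1 : R) else 0) <= (w.+1)%:R.
Proof.
suff : \sum_(i < N) (if (a <= i <= a + w)%N then (1 : R) else 0) <= (minn (N - a) w.+1)%:R.
  move=> H; apply: le_trans H _; rewrite ler_nat; exact: geq_minr.
elim: N => [|N IH]; first by rewrite big_ord0.
rewrite big_ord_recr /=; case: ifP => h.
  apply: le_trans (lerD IH (lexx 1)) _; rewrite natr1 ler_nat; lia.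
by rewrite addr0; apply: le_trans IH _; rewrite ler_nat; lia.
Qed.

Lemma win N N' w (x : nat -> R) :
  \sum_(i < N) \sum_(q < N') (if (blk q <= i <= blk q + w)%N then x q ^+ 2 else 0)
  <= (w.+1)%:R * sq N' x.
Proof.
rewrite exchange_big /= /sq mulr_sumr; apply: ler_sum => q _.
have -> : \sum_(i < N) (if (blk q <= i <= blk q + w)%N then x q ^+ 2 else 0) =
   x q ^+ 2 * \sum_(i < N) (if (blk q <= i <= blk q + w)%N then (1 : R) else 0).
  rewrite mulr_sumr; apply: eq_bigr => i _; case: ifP; by rewrite ?mulr1 ?mulr0.
rewrite mulrC; apply: ler_wpM2r; [exact: sqr_ge0 | exact: count_win].
Qed.

Lemma opnorm_of_sq (F : mx R) c : 0 <= c ->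
  (forall N x, sq N (app N F x) <= c ^+ 2 * sq N x) -> opnorm_le F c.
Proof.
move=> c0 H; split => // m n x.
set N := maxn m n.
pose x' := fun j => if (j < n)%N then x j else 0.
have E1 : forall i, \sum_(j < n) F i j * x j = app N F x' i.
  move=> i; rewrite /app (sum_widen (fun j => F i j * x j) (leq_maxr m n)).
  by apply: eq_bigr => j _; rewrite /x'; case: ifP; rewrite ?mulr0.
have E2 : \sum_(j < n) x j ^+ 2 = sq N x'.
  rewrite /sq (sum_widen (fun j => x j ^+ 2) (leq_maxr m n)).
  by apply: eq_bigr => j _; rewrite /x'; case: ifP => //; rewrite expr0n.
rewrite E2; apply: le_trans (H N x'); rewrite /sq.
rewrite (sum_widen (fun i => (\sum_(j < n) F i j * x j) ^+ 2) (leq_maxl m n)).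
apply: ler_sum => i _; rewrite E1; case: ifP => _ //; exact: sqr_ge0.
Qed.

Definition yN N (x : nat -> R) := fun q => if (q < N)%N then x q else 0.

Definition Ak k : mx R := fun p q =>
  if (blk q < blk p)%N then
    - \sum_(c < nb (blk p)) M p c * (al * \sum_(m < k) Bp (nb (blk p)) m c q)
  else (p == q)%:R.

Definition V N x m p :=
  - (al * \sum_(c < nb (blk p)) M p c * app (nb (blk p)) (Bp (nb (blk p)) m) (yN N x) c).

Definition Rr N x K p :=
  - \sum_(c < nb (blk p)) M p c *
      app (nb (blk p)) (Bp (nb (blk p)) K) (app (nb (blk p)) (G (nb (blk p))) (yN N x)) c.

Lemma rowL N (x : nat -> R) p (F : nat -> R) :
  \sum_(q < N) (if (blk q < blk p)%N then F q else 0) * x q =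
  \sum_(q < nb (blk p)) F q * yN N x q.
Proof.
rewrite (eq_bigr (fun q : 'I_N => if (q < nb (blk p))%N then F q * x q else 0)); last first.
  by move=> q _; rewrite ltn_blk; case: ifP; rewrite ?mul0r.
rewrite (sum_swap_range (nb (blk p)) N (fun q => F q * x q)); apply: eq_bigr => q _.
by rewrite /yN; case: ifP; rewrite ?mulr0.
Qed.

Lemma rowM n n' p (H : mx R) (y : nat -> R) :
  \sum_(q < n) (\sum_(c < n') M p c * H c q) * y q = \sum_(c < n') M p c * app n H y c.
Proof. by rewrite /app sum_mul_swap. Qed.

Lemma app_sumM n k (F : nat -> mx R) (y : nat -> R) c :
  app n (fun c q => \sum_(m < k) F m c q) y c = \sum_(m < k) app n (F m) y c.
Proof.
rewrite /app; under eq_bigr => q _ do rewrite mulr_suml.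
by rewrite exchange_big.
Qed.

Lemma app_scaleM n a (H : mx R) (y : nat -> R) c : app n (fun c q => a * H c q) y c = a * app n H y c.
Proof. rewrite /app mulr_sumr; apply: eq_bigr => q _; by rewrite mulrA. Qed.

Lemma app_subM n (H1 H2 : mx R) (y : nat -> R) c :
  app n (fun c q => H1 c q - H2 c q) y c = app n H1 y c - app n H2 y c.
Proof. rewrite /app -sumrB; apply: eq_bigr => q _; by rewrite mulrBl. Qed.

Lemma Ak_app k N x p : (p < N)%N ->
  app N (Ak k) x p = x p + \sum_(m < k) V N x m p.
Proof.
move=> Hp; rewrite /app.
set n := nb (blk p).
pose S q := - \sum_(c < n) M p c * (al * \sum_(m < k) Bp n m c q).
have E1 : forall q, Ak k p q = (p == q)%:R + (if (blk q < blk p)%N then S q else 0).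
  move=> q; rewrite /Ak; case: ifP => h; last by rewrite addr0.
  rewrite (_ : (p == q) = false) ?add0r //; apply/negbTE; apply/eqP => E.
  by rewrite E ltnn in h.
under eq_bigr => q _ do rewrite E1 mulrDl.
rewrite big_split /= (sum_delta x Hp); congr (_ + _).
rewrite rowL /S.
rewrite (eq_bigr (fun q : 'I_n => - ((\sum_(c < n) M p c * (al * \sum_(m < k) Bp n m c q)) * yN N x q))); last by move=> q _; rewrite mulNr.
rewrite sumrN (rowM _ _ p (fun c q => al * \sum_(m < k) Bp n m c q)).
rewrite (eq_bigr (fun c : 'I_n => M p c * (al * \sum_(m < k) app n (Bp n m) (yN N x) c))); last first.
  by move=> c _; rewrite (app_scaleM n al (fun c q => \sum_(m < k) Bp n m c q)) (app_sumM n k (fun m => Bp n m)).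
rewrite /V sumrN; congr (- _).
under [RHS]eq_bigr => m _ do rewrite mulr_sumr.
rewrite [RHS]exchange_big /=; apply: eq_bigr => c _.
rewrite !mulr_sumr; apply: eq_bigr => m _; ring.
Qed.

Lemma E_entry k p q : mxdiff T (Ak k) p q =
  if (blk q < blk p)%N then
    - \sum_(c < nb (blk p)) M p c *
        (G (nb (blk p)) c q - al * \sum_(m < k) Bp (nb (blk p)) m c q)
  else 0.
Proof.
rewrite /mxdiff /Ak; case: ifP => h.
  rewrite (TF h) opprK addrC -sumrB -sumrN; apply: eq_bigr => c _; ring.
case: (ltngtP (blk p) (blk q)) => h'.
- rewrite (low' HTlow h') (_ : (p == q) = false) ?subrr //; apply/negbTE; apply/eqP => E.
  by rewrite E ltnn in h'.
- by rewrite h' in h.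
- by rewrite Tdiag // subrr.
Qed.

Lemma E_app k K N x p : (p < N)%N -> (k <= K)%N ->
  app N (mxdiff T (Ak k)) x p = \sum_(k <= m < K) V N x m p + Rr N x K p.
Proof.
move=> Hp hK; rewrite /app.
set n := nb (blk p).
under eq_bigr => q _ do rewrite E_entry.
rewrite (rowL N x p (fun q => - \sum_(c < n) M p c * (G n c q - al * \sum_(m < k) Bp n m c q))).
rewrite (eq_bigr (fun q : 'I_n => - ((\sum_(c < n) M p c * (G n c q - al * \sum_(m < k) Bp n m c q)) * yN N x q))); last by move=> q _; rewrite mulNr.
rewrite sumrN (rowM _ _ p (fun c q => G n c q - al * \sum_(m < k) Bp n m c q)).
set w := app n (G n) (yN N x).
have Hw : forall c, (c < n)%N -> app n (fun c q => G n c q - al * \sum_(m < k) Bp n m c q) (yN N x) c =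
   al * \sum_(k <= m < K) app n (Bp n m) (yN N x) c + app n (Bp n K) w c.
  move=> c hc.
  rewrite (app_subM n (G n) (fun c q => al * \sum_(m < k) Bp n m c q)).
  rewrite (app_scaleM n al (fun c q => \sum_(m < k) Bp n m c q)) (app_sumM n k (fun m => Bp n m)).
  rewrite -/w (@Bp_ident n (yN N x) w _ K c hc); last by move=> q hq; rewrite /w MGapp.
  rewrite -(big_mkord xpredT (fun m => app n (Bp n m) (yN N x) c)).
  rewrite -(big_mkord xpredT (fun m => app n (Bp n m) (yN N x) c)).
  rewrite (big_cat_nat (leq0n k) hK) /=; ring.
rewrite (eq_bigr (fun c : 'I_n => M p c * (al * \sum_(k <= m < K) app n (Bp n m) (yN N x) c + app n (Bp n K) w c))); last first.
  by move=> c _; rewrite Hw.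
rewrite /Rr /V -/n -/w.
under eq_bigr => c _ do rewrite mulrDr.
rewrite big_split /= opprD; congr (_ + _).
rewrite sumrN; congr (- _).
rewrite (eq_bigr (fun c : 'I_n => \sum_(k <= m < K) al * (M p c * app n (Bp n m) (yN N x) c))); last first.
  move=> c _; rewrite !mulr_sumr; apply: eq_bigr => m _; ring.
rewrite -(big_mkord xpredT (fun c => \sum_(k <= m < K) al * (M p c * app n (Bp n m) (yN N x) c))).
rewrite exchange_big_nat /=; apply: eq_bigr => m _.
by rewrite mulr_sumr big_mkord.
Qed.

Lemma sq_yN_le n N x : sq n (yN N x) <= sq N x.
Proof.
rewrite /sq (eq_bigr (fun q : 'I_n => if (q < N)%N then x q ^+ 2 else 0)); last first.
  by move=> q _; rewrite /yN; case: ifP => //; rewrite expr0n.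
rewrite -(sum_swap_range n N (fun q => x q ^+ 2)); apply: ler_sum => q _.
case: ifP => _ //; exact: sqr_ge0.
Qed.

Lemma V_bound N x m :
  \sum_(p < N) V N x m p ^+ 2 <=
  Lam ^+ 2 * al ^+ 2 * rho ^+ m * ((m.+1 * b0).+1)%:R * sq N x.
Proof.
pose z i c := if ((c < nb i) && (i - b0 <= blk c))%N
              then al * app (nb i) (Bp (nb i) m) (yN N x) c else 0.
have E1 : forall p, (p < N)%N -> V N x m p ^+ 2 = (\sum_(c < nb N) M p c * z (blk p) c) ^+ 2.
  move=> p hp; rewrite /V sqrrN; congr (_ ^+ 2).
  have hn : (nb (blk p) <= nb N)%N by apply: nb_le; apply: ltnW; exact: leq_ltn_trans (blk_le p) hp.
  rewrite mulr_sumr (sum_widen (fun c => al * (M p c * app (nb (blk p)) (Bp (nb (blk p)) m) (yN N x) c)) hn).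
  apply: eq_bigr => c _; rewrite /z; case: ifP => hc /=.
    case: ifP => hc2; first by ring.
    rewrite HMb ?mul0r ?mulr0 //; apply/orP; left; move/negbT: hc2; rewrite -ltnNge; lia.
  by rewrite mulr0.
rewrite (eq_bigr (fun p : 'I_N => (\sum_(c < nb N) M p c * z (blk p) c) ^+ 2)); last first.
  by move=> p _; rewrite E1.
apply: le_trans (GL0 N (nb N) z) _.
have E3 : forall i, (i < N)%N -> sq (nb N) (z i) <=
    al ^+ 2 * rho ^+ m * \sum_(q < N) (if (blk q <= i <= blk q + m.+1 * b0)%N then x q ^+ 2 else 0).
  move=> i hi.
  have hn : (nb i <= nb N)%N by apply: nb_le; exact: ltnW.
  pose y' := fun q => if (i - m.+1 * b0 <= blk q)%N then yN N x q else 0.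
  have S1 : sq (nb N) (z i) <= al ^+ 2 * sq (nb i) (app (nb i) (Bp (nb i) m) y').
    rewrite /sq (sum_widen (fun c => app (nb i) (Bp (nb i) m) y' c ^+ 2) hn) mulr_sumr.
    apply: ler_sum => c _; rewrite /z; case: ifP => hc; last by rewrite expr0n /=; case: ifP => _; rewrite ?mulr0 //; apply: mulr_ge0; [exact: sqr_ge0| exact: sqr_ge0].
    case/andP: hc => hc1 hc2; rewrite hc1 exprMn; apply: ler_wpM2l; first exact: sqr_ge0.
    rewrite le_eqVlt; apply/orP; left; apply/eqP; congr (_ ^+ 2).
    apply: eq_bigr => q _; rewrite /y'; case: ifP => // hq.
    rewrite Bp_blk ?mul0r //; apply/orP; left; move/negbT: hq; rewrite -ltnNge => hq.
    move: hc2 hq; rewrite mulSn; lia.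
  apply: le_trans S1 _; rewrite -mulrA; apply: ler_wpM2l; first exact: sqr_ge0.
  apply: le_trans (sq_Bp _ _ _) _; apply: ler_wpM2l.
    by apply: exprn_ge0; case/andP: rho_bounds.
  rewrite /sq (eq_bigr (fun q : 'I_(nb i) => if (q < N)%N then
        (if (i - m.+1 * b0 <= blk q)%N then x q ^+ 2 else 0) else 0)); last first.
    by move=> q _; rewrite /y' /yN; do 2 case: ifP => //; rewrite ?expr0n.
  rewrite -(sum_swap_range (nb i) N (fun q => if (i - m.+1 * b0 <= blk q)%N then x q ^+ 2 else 0)).
  apply: ler_sum => q _; case: ifP => hq; last by case: ifP => _ //; exact: sqr_ge0.
  case: ifP => hq2; last by case: ifP => _ //; exact: sqr_ge0.
  rewrite ifT //; move: hq; rewrite ltn_blk => hq; apply/andP; split; lia.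
apply: le_trans (_ : Lam ^+ 2 * \sum_(i < N) (al ^+ 2 * rho ^+ m *
     \sum_(q < N) (if (blk q <= i <= blk q + m.+1 * b0)%N then x q ^+ 2 else 0)) <= _).
  apply: ler_wpM2l; first exact: sqr_ge0.
  by apply: ler_sum => i _; apply: E3.
rewrite -mulr_sumr.
have -> : Lam ^+ 2 * al ^+ 2 * rho ^+ m * ((m.+1 * b0).+1)%:R * sq N x =
   Lam ^+ 2 * ((al ^+ 2 * rho ^+ m) * (((m.+1 * b0).+1)%:R * sq N x)) by ring.
apply: ler_wpM2l; first exact: sqr_ge0.
apply: ler_wpM2l; first by apply: mulr_ge0; [exact: sqr_ge0 | apply: exprn_ge0; case/andP: rho_bounds].
exact: win.
Qed.

Lemma Rr_bound N x K :
  \sum_(p < N) Rr N x K p ^+ 2 <= Lam ^+ 2 * (N%:R * (rho ^+ K / C ^+ 2 * sq N x)).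
Proof.
pose z i c := if (c < nb i)%N then
   app (nb i) (Bp (nb i) K) (app (nb i) (G (nb i)) (yN N x)) c else 0.
rewrite (eq_bigr (fun p : 'I_N => (\sum_(c < nb N) M p c * z (blk p) c) ^+ 2)); last first.
  move=> p _; rewrite /Rr sqrrN; congr (_ ^+ 2).
  have hn : (nb (blk p) <= nb N)%N by apply: nb_le; apply: ltnW; exact: leq_ltn_trans (blk_le p) (ltn_ord p).
  rewrite (sum_widen (fun c => M p c * app (nb (blk p)) (Bp (nb (blk p)) K) (app (nb (blk p)) (G (nb (blk p))) (yN N x)) c) hn).
  by apply: eq_bigr => c _; rewrite /z; case: ifP; rewrite ?mulr0.
apply: le_trans (GL0 N (nb N) z) _; apply: ler_wpM2l; first exact: sqr_ge0.
have -> : N%:R * (rho ^+ K / C ^+ 2 * sq N x) = \sum_(i < N) (rho ^+ K / C ^+ 2 * sq N x).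
  by rewrite sumr_const card_ord mulr_natl.
apply: ler_sum => i _.
have hn : (nb i <= nb N)%N by apply: nb_le; exact: ltnW.
set w := app (nb i) (G (nb i)) (yN N x).
have -> : sq (nb N) (z i) = sq (nb i) (app (nb i) (Bp (nb i) K) w).
  rewrite /sq (sum_widen (fun c => app (nb i) (Bp (nb i) K) w c ^+ 2) hn).
  by apply: eq_bigr => c _; rewrite /z; case: ifP => //; rewrite expr0n.
apply: le_trans (sq_Bp _ _ _) _.
rewrite -mulrA; apply: ler_wpM2l; first by apply: exprn_ge0; case/andP: rho_bounds.
have C2 : 0 < C ^+ 2 by rewrite exprn_gt0.
rewrite mulrC ler_pdivlMr // mulrC; apply: le_trans (sq_G _ _) _; exact: sq_yN_le.
Qed.

Definition sg := (1 + rho) / 2.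
Definition tg := rho / sg ^+ 2.
Definition A0 := Lam ^+ 2 * al ^+ 2 * (b0.+1)%:R / (1 - tg).

Lemma sg_bounds : 0 < sg < 1.
Proof. case/andP: rho_bounds => r0 r1; rewrite /sg; apply/andP; split; lra. Qed.

Lemma tg_bounds : 0 <= tg < 1.
Proof.
case/andP: rho_bounds => r0 r1; case/andP: sg_bounds => s0 s1.
have s2 : 0 < sg ^+ 2 by rewrite exprn_gt0.
rewrite /tg; apply/andP; split; first by rewrite divr_ge0 // ltW.
rewrite ltr_pdivrMr // mul1r.
have -> : sg ^+ 2 = rho + ((1 - rho) / 2) ^+ 2 by rewrite /sg; field.
rewrite ltrDl exprn_gt0 //; lra.
Qed.

Lemma rho_eq : rho = tg * sg ^+ 2.
Proof.
case/andP: sg_bounds => s0 _.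
rewrite /tg mulrAC -mulrA divff ?mulr1 //; apply: lt0r_neq0; exact: exprn_gt0.
Qed.

Lemma A0_ge0 : 0 <= A0.
Proof.
case/andP: tg_bounds => t0 t1.
rewrite /A0 divr_ge0 //; last by rewrite subr_ge0 ltW.
by apply: mulr_ge0; [apply: mulr_ge0; exact: sqr_ge0 | exact: ler0n].
Qed.

Lemma coefV m : Lam ^+ 2 * al ^+ 2 * rho ^+ m * ((m.+1 * b0).+1)%:R <= A0 * (sg ^+ 2) ^+ m.
Proof.
case/andP: tg_bounds => t0 t1.
have h1 : ((m.+1 * b0).+1)%:R <= (b0.+1)%:R * (m.+1)%:R :> R.
  by rewrite -natrM ler_nat; lia.
have h2 := lin_geo m tg_bounds.
have a0 : 0 <= Lam ^+ 2 * al ^+ 2 by apply: mulr_ge0; exact: sqr_ge0.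
have s0 : 0 <= (sg ^+ 2) ^+ m by apply: exprn_ge0; exact: sqr_ge0.
have t0m : 0 <= tg ^+ m by exact: exprn_ge0.
rewrite rho_eq [(tg * _) ^+ m]exprMn /A0.
apply: le_trans (_ : Lam ^+ 2 * al ^+ 2 * (tg ^+ m * (sg ^+ 2) ^+ m) * ((b0.+1)%:R * (m.+1)%:R) <= _).
  apply: ler_wpM2l => //; apply: mulr_ge0 => //; exact: mulr_ge0.
have -> : Lam ^+ 2 * al ^+ 2 * (tg ^+ m * (sg ^+ 2) ^+ m) * ((b0.+1)%:R * (m.+1)%:R) =
   (Lam ^+ 2 * al ^+ 2 * (b0.+1)%:R * (sg ^+ 2) ^+ m) * ((m.+1)%:R * tg ^+ m) by ring.
have -> : Lam ^+ 2 * al ^+ 2 * (b0.+1)%:R / (1 - tg) * (sg ^+ 2) ^+ m =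
   (Lam ^+ 2 * al ^+ 2 * (b0.+1)%:R * (sg ^+ 2) ^+ m) * (1 / (1 - tg)) by rewrite mul1r; ring.
apply: ler_wpM2l => //; apply: mulr_ge0; [apply: mulr_ge0 => //; exact: ler0n | done].
Qed.

Lemma sumV_bound N x a b :
  \sum_(p < N) (\sum_(a <= m < b) V N x m p) ^+ 2 <= A0 * (sg ^+ a / (1 - sg)) ^+ 2 * sq N x.
Proof.
case/andP: sg_bounds => s0 s1.
have w0 : forall m, 0 < sg ^+ m by move=> m; exact: exprn_gt0.
set S := \sum_(a <= m < b) sg ^+ m.
have HS : S <= sg ^+ a / (1 - sg) by apply: geom_tail; rewrite ltW.
have S0 : 0 <= S by apply: sumr_ge0 => m _; exact: ltW.
apply: le_trans (_ : \sum_(p < N) (S * \sum_(a <= m < b) (V N x m p ^+ 2 / sg ^+ m)) <= _).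
  by apply: ler_sum => p _; apply: cs_w.
rewrite -mulr_sumr.
rewrite -(big_mkord xpredT (fun p => \sum_(a <= m < b) (V N x m p ^+ 2 / sg ^+ m))).
rewrite exchange_big_nat /=.
have HB : forall m, \sum_(0 <= p < N) (V N x m p ^+ 2 / sg ^+ m) <= A0 * sq N x * sg ^+ m.
  move=> m; rewrite -mulr_suml big_mkord ler_pdivrMr //.
  apply: le_trans (V_bound N x m) _.
  apply: le_trans (ler_wpM2r (sq_ge0 N x) (coefV m)) _.
  rewrite le_eqVlt; apply/orP; left; apply/eqP; rewrite -exprM mulnC exprM; ring.
apply: le_trans (_ : S * \sum_(a <= m < b) (A0 * sq N x * sg ^+ m) <= _).
  by apply: ler_wpM2l => //; apply: ler_sum => m _; exact: HB.
rewrite -mulr_sumr.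
have Q0 : 0 <= A0 * sq N x by apply: mulr_ge0; [exact: A0_ge0 | exact: sq_ge0].
apply: le_trans (_ : S * (A0 * sq N x * (sg ^+ a / (1 - sg))) <= _).
  by apply: ler_wpM2l => //; apply: ler_wpM2l.
apply: le_trans (_ : (sg ^+ a / (1 - sg)) * (A0 * sq N x * (sg ^+ a / (1 - sg))) <= _).
  apply: ler_wpM2r => //; apply: mulr_ge0 => //; apply: divr_ge0; [exact: ltW | rewrite subr_ge0 ltW //].
rewrite le_eqVlt; apply/orP; left; apply/eqP; ring.
Qed.

Definition Ek k := 2 * A0 * (sg ^+ k / (1 - sg)) ^+ 2.

Lemma sq_E k N x : sq N (app N (mxdiff T (Ak k)) x) <= Ek k * sq N x.
Proof.
apply/ler_addgt0Pr => e e0.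
have C2 : 0 < C ^+ 2 by rewrite exprn_gt0.
set Q := 2 * (Lam ^+ 2 * (N%:R * (1 / C ^+ 2 * sq N x))).
have Q0 : 0 <= Q.
  apply: mulr_ge0 => //; apply: mulr_ge0; first exact: sqr_ge0.
  apply: mulr_ge0; first exact: ler0n.
  apply: mulr_ge0; [by rewrite divr_ge0 // ltW | exact: sq_ge0].
have eQ : 0 < e / (Q + 1) by rewrite divr_gt0 // ltr_wpDl.
have [K0 HK0] := small_pow rho_bounds eQ.
set K := (k + K0)%N.
have hK : (k <= K)%N by rewrite leq_addr.
have rK : rho ^+ K <= e / (Q + 1).
  apply: le_trans HK0; case/andP: rho_bounds => r0 r1; apply: ler_wiXn2l => //.
    exact: ltW.
  by rewrite leq_addl.
rewrite (eq_sq (y := fun p => \sum_(k <= m < K) V N x m p + Rr N x K p)); last first.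
  by move=> p hp; rewrite (E_app x hp hK).
apply: le_trans (sq_add2 _ _ _) _.
have H1 := sumV_bound N x k K.
have H2 := Rr_bound N x K.
rewrite /sq in H1 H2 *.
apply: le_trans (lerD (ler_wpM2l (ler0n _ 2) H1) (ler_wpM2l (ler0n _ 2) H2)) _.
rewrite /Ek -mulrA -mulrA; apply: lerD.
  rewrite le_eqVlt; apply/orP; left; apply/eqP; ring.
apply: le_trans (_ : Q * rho ^+ K <= _).
  rewrite le_eqVlt; apply/orP; left; apply/eqP; rewrite /Q /sq; field; exact: lt0r_neq0.
apply: le_trans (ler_wpM2l Q0 rK) _.
have -> : Q * (e / (Q + 1)) = e * (Q / (Q + 1)) by rewrite mulrCA mulrA.
apply: ler_piMr; first exact: ltW.
rewrite ler_pdivrMr ?ltr_wpDl // mul1r lerDl //.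
Qed.

Definition Ab := 2 + 2 * (A0 / (1 - sg) ^+ 2).

Lemma sq_Ak k N x : sq N (app N (Ak k) x) <= Ab * sq N x.
Proof.
rewrite (eq_sq (y := fun p => x p + \sum_(0 <= m < k) V N x m p)); last first.
  by move=> p hp; rewrite Ak_app // big_mkord.
apply: le_trans (sq_add2 _ _ _) _.
have H1 := sumV_bound N x 0 k.
rewrite /sq in H1 *.
apply: le_trans (lerD (lexx _) (ler_wpM2l (ler0n _ 2) H1)) _.
rewrite le_eqVlt; apply/orP; left; apply/eqP; rewrite /Ab expr0 /sq; field.
by case/andP: sg_bounds => _ s1; apply: lt0r_neq0; rewrite subr_gt0.
Qed.

Lemma group_blk n a b (f : nat -> R) :
  \sum_(q < n) (if (a <= blk q < b)%N then f q else 0) =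
  \sum_(a <= j < b) \sum_(q < n) (if blk q == j then f q else 0).
Proof.
elim: b => [|b IH].
  by rewrite big_geq // big1 // => q _; rewrite ltn0 andbF.
case: (leqP a b) => hab.
  rewrite big_nat_recr //= -IH -big_split /=; apply: eq_bigr => q _.
  case: ifP => H1; case: ifP => H2; case: ifP => H3; rewrite ?addr0 ?add0r //;
    exfalso; move: H1 H2 H3; lia.
rewrite big_geq // big1 // => q _; case: ifP => //; lia.
Qed.

Definition LB := 2 + 2 * (Lam ^+ 2 * (b0%:R / C ^+ 2) * (b0.+1)%:R).

Lemma L_split p q : L p q = (p == q)%:R + (if (blk q < blk p)%N then L p q else 0).
Proof.
case: ifP => h.
  rewrite (_ : (p == q) = false) ?add0r //; apply/negbTE; apply/eqP => E; by rewrite E ltnn in h.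
rewrite addr0; case: (ltngtP (blk p) (blk q)) => h'.
- rewrite (low' HLlow h') (_ : (p == q) = false) //; apply/negbTE; apply/eqP => E.
  by rewrite E ltnn in h'.
- by rewrite h' in h.
- exact: Ldiag'.
Qed.

Definition Gq (c q : nat) : R :=
  if (c < nb (blk q).+1)%N then G (nb (blk q).+1) c q else 0.

Lemma sq_cut n m (v : nat -> R) : (m <= n)%N ->
  sq n (fun c => if (c < m)%N then v c else 0) = sq m v.
Proof.
move=> h; rewrite /sq (sum_widen (fun c => v c ^+ 2) h); apply: eq_bigr => c _.
by case: ifP => //; rewrite expr0n.
Qed.

Lemma U1 i j c (g : nat -> R) : (j < i)%N ->
  \sum_(q < nb i) (if blk q == j then Gq c q * g q else 0) =
  if (c < nb j.+1)%N then app (nb j.+1) (G (nb j.+1)) (fun q => if blk q == j then g q else 0) c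
  else 0.
Proof.
move=> hji; case: ifP => hc.
  have hn : (nb j.+1 <= nb i)%N by apply: nb_le.
  rewrite /app (sum_widen (fun q => G (nb j.+1) c q * (if blk q == j then g q else 0)) hn).
  apply: eq_bigr => q _; case: eqP => hq.
    have : (q < nb j.+1)%N by rewrite ltn_blk hq.
    by move=> ->; rewrite /Gq hq hc.
  by case: ifP; rewrite ?mulr0.
apply: big1 => q _; case: eqP => // hq; by rewrite /Gq hq hc mul0r.
Qed.

Lemma sq_L N x : sq N (app N L x) <= LB * sq N x.
Proof.
pose z i c := \sum_(q < nb i) (if (i - b0 <= blk q)%N then Gq c q * yN N x q else 0).
have E1 : forall p, (p < N)%N -> app N L x p = x p + \sum_(c < nb N) M p c * z (blk p) c.
  move=> p hp; rewrite /app.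
  under eq_bigr => q _ do rewrite L_split mulrDl.
  rewrite big_split /= (sum_delta x hp); congr (_ + _).
  rewrite (rowL N x p (fun q => L p q)).
  have hn : (nb (blk p) <= nb N)%N by apply: nb_le; apply: ltnW; exact: leq_ltn_trans (blk_le p) hp.
  rewrite (eq_bigr (fun q : 'I_(nb (blk p)) => (\sum_(c < nb N) M p c *
       (if (blk p - b0 <= blk q)%N then Gq c q else 0)) * yN N x q)); last first.
    move=> q _; congr (_ * _); have hq : (blk q < blk p)%N by rewrite -ltn_blk.
    rewrite (LF hq); case h1 : (blk p - b0 <= blk q)%N => /=.
      have hq2 : (nb (blk q).+1 <= nb N)%N by apply: leq_trans hn; apply: nb_le.
      rewrite (sum_widen (fun c => M p c * G (nb (blk q).+1) c q) hq2).
      by apply: eq_bigr => c _; rewrite /Gq; case: ifP; rewrite ?mulr0.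
    rewrite [RHS]big1; last by move=> c _; rewrite mulr0.
    apply: big1 => c _; rewrite HMb ?mul0r //; apply/orP; left.
    have : (blk c < (blk q).+1)%N by rewrite -ltn_blk.
    move/negbT: h1; rewrite -ltnNge => h1 h2; lia.
  rewrite (rowM _ _ p (fun c q => if (blk p - b0 <= blk q)%N then Gq c q else 0)).
  apply: eq_bigr => c _; congr (_ * _); rewrite /z /app; apply: eq_bigr => q _.
  by case: ifP; rewrite ?mul0r.
rewrite (eq_sq (y := fun p => x p + \sum_(c < nb N) M p c * z (blk p) c)); last first.
  by move=> p hp; rewrite E1.
apply: le_trans (sq_add2 _ _ _) _.
have HZ : forall i, (i < N)%N -> sq (nb N) (z i) <=
    b0%:R / C ^+ 2 * \sum_(q < N) (if (blk q <= i <= blk q + b0)%N then x q ^+ 2 else 0).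
  move=> i hi.
  pose u j c := \sum_(q < nb i) (if blk q == j then Gq c q * yN N x q else 0).
  have Ez : forall c, z i c = \sum_(i - b0 <= j < i) u j c.
    move=> c; rewrite /u -(group_blk (nb i) (i - b0) i (fun q => Gq c q * yN N x q)).
    apply: eq_bigr => q _.
    have : (blk q < i)%N by rewrite -ltn_blk.
    by move=> h; rewrite h andbT.
  have S1 : sq (nb N) (z i) <= b0%:R * \sum_(i - b0 <= j < i) sq (nb N) (u j).
    rewrite /sq.
    apply: le_trans (_ : \sum_(c < nb N) (b0%:R * \sum_(i - b0 <= j < i) u j c ^+ 2) <= _).
      apply: ler_sum => c _; rewrite Ez.
      apply: le_trans (@cs_w _ (i - b0) i (fun j => u j c) (fun _ => 1) (fun _ => ltr01)) _.
      rewrite sumr_const_nat.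
      under eq_bigr => j _ do rewrite divr1.
      apply: ler_wpM2r; first by apply: sumr_ge0 => j _; exact: sqr_ge0.
      by rewrite ler_nat; lia.
    rewrite -mulr_sumr; apply: ler_wpM2l; first exact: ler0n.
    rewrite -(big_mkord xpredT (fun c => \sum_(i - b0 <= j < i) u j c ^+ 2)) exchange_big_nat /=.
    by apply: ler_sum_nat => j _; rewrite big_mkord.
  have S2 : forall j, (i - b0 <= j < i)%N -> sq (nb N) (u j) <=
      1 / C ^+ 2 * \sum_(q < nb i) (if blk q == j then yN N x q ^+ 2 else 0).
    move=> j /andP [hj1 hj2].
    have hjN : (nb j.+1 <= nb N)%N by apply: nb_le; lia.
    have hji : (nb j.+1 <= nb i)%N by apply: nb_le.
    pose yj := fun q => if blk q == j then yN N x q else 0.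
    have -> : sq (nb N) (u j) = sq (nb j.+1) (app (nb j.+1) (G (nb j.+1)) yj).
      rewrite -(sq_cut _ hjN); apply: eq_sq => c _; rewrite /u (U1 c (yN N x) hj2) //.
    have C2 : 0 < C ^+ 2 by rewrite exprn_gt0.
    rewrite mul1r ler_pdivlMl //.
    apply: le_trans (sq_G _ _) _.
    rewrite le_eqVlt; apply/orP; left; apply/eqP.
    rewrite /sq (sum_widen (fun q => yj q ^+ 2) hji); apply: eq_bigr => q _.
    rewrite /yj; case: ifP => hq; first by case: ifP => //; rewrite expr0n.
    case: eqP => // E; exfalso; move/negbT: hq; rewrite ltn_blk E; lia.
  apply: le_trans S1 _.
  apply: le_trans (_ : b0%:R * \sum_(i - b0 <= j < i) (1 / C ^+ 2 *
     \sum_(q < nb i) (if blk q == j then yN N x q ^+ 2 else 0)) <= _).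
    apply: ler_wpM2l; first exact: ler0n.
    exact: ler_sum_nat.
  rewrite -mulr_sumr -(group_blk (nb i) (i - b0) i (fun q => yN N x q ^+ 2)).
  rewrite mulrA mul1r; apply: ler_wpM2l.
    by apply: divr_ge0; [exact: ler0n | exact: sqr_ge0].
  rewrite (eq_bigr (fun q : 'I_(nb i) => if (q < N)%N then
        (if (i - b0 <= blk q < i)%N then x q ^+ 2 else 0) else 0)); last first.
    by move=> q _; rewrite /yN; do 2 case: ifP => //; rewrite expr0n.
  rewrite -(sum_swap_range (nb i) N (fun q => if (i - b0 <= blk q < i)%N then x q ^+ 2 else 0)).
  apply: ler_sum => q _; case: ifP => hq; last by case: ifP => _ //; exact: sqr_ge0.
  case: ifP => hq2; last by case: ifP => _ //; exact: sqr_ge0.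
  rewrite ifT //; move: hq hq2; rewrite ltn_blk; lia.
apply: le_trans (lerD (lexx _) (ler_wpM2l (ler0n _ 2) (GL0 N (nb N) z))) _.
apply: le_trans (_ : 2 * sq N x + 2 * (Lam ^+ 2 * \sum_(i < N) (b0%:R / C ^+ 2 *
    \sum_(q < N) (if (blk q <= i <= blk q + b0)%N then x q ^+ 2 else 0))) <= _).
  apply: lerD => //; apply: ler_wpM2l; first exact: ler0n.
  apply: ler_wpM2l; first exact: sqr_ge0.
  by apply: ler_sum => i _; apply: HZ.
rewrite -mulr_sumr.
apply: le_trans (_ : 2 * sq N x + 2 * (Lam ^+ 2 * (b0%:R / C ^+ 2 * ((b0.+1)%:R * sq N x))) <= _).
  apply: lerD => //; apply: ler_wpM2l; first exact: ler0n.
  apply: ler_wpM2l; first exact: sqr_ge0.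
  apply: ler_wpM2l; first by apply: divr_ge0; [exact: ler0n | exact: sqr_ge0].
  exact: win.
rewrite le_eqVlt; apply/orP; left; apply/eqP; rewrite /LB; ring.
Qed.

Section Inv.
Variable A : mx R.
Hypothesis HAup : forall p q, (p < q)%N -> A p q = 0.
Hypothesis HAd : forall p, A p p = 1.

Fixpoint fcol (q n : nat) : seq R :=
  if n is n'.+1 then
    rcons (fcol q n') ((n' == q)%:R - \sum_(k < n') A n' k * nth 0 (fcol q n') k)
  else [::].

Definition Xinv p q := nth 0 (fcol q p.+1) p.

Lemma size_fcol q n : size (fcol q n) = n.
Proof. by elim: n => //= n IH; rewrite size_rcons IH. Qed.

Lemma nth_fcol q n k : (k < n)%N -> nth 0 (fcol q n) k = Xinv k q.
Proof.
elim: n => // n IH hk /=; rewrite nth_rcons size_fcol.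
case: (ltnP k n) => h; first exact: IH.
have -> : k = n by lia.
by rewrite eqxx /Xinv /= nth_rcons size_fcol ltnn eqxx.
Qed.

Lemma Xinv_rec p q : Xinv p q = (p == q)%:R - \sum_(k < p) A p k * Xinv k q.
Proof.
rewrite /Xinv /= nth_rcons size_fcol ltnn eqxx; congr (_ - _).
by apply: eq_bigr => k _; rewrite nth_fcol.
Qed.

Lemma Xinv_up p q : (p < q)%N -> Xinv p q = 0.
Proof.
elim/ltn_ind: p => p IH h; rewrite Xinv_rec.
rewrite big1 ?subr0; first by case: eqP => // E; rewrite E ltnn in h.
move=> k _; rewrite IH ?mulr0 //; exact: ltn_trans h.
Qed.

Lemma AX N p q : (p < N)%N -> \sum_(k < N) A p k * Xinv k q = (p == q)%:R.
Proof.
move=> hp.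
have -> : \sum_(k < N) A p k * Xinv k q = \sum_(k < p.+1) A p k * Xinv k q.
  rewrite (sum_widen (fun k => A p k * Xinv k q) hp); apply: eq_bigr => k _.
  case: ifP => // /negbT; rewrite -leqNgt => h; by rewrite HAup ?mul0r.
rewrite big_ord_recr /= HAd mul1r [Xinv p q]Xinv_rec; ring.
Qed.

Lemma AX_mx : mxmul_eq A Xinv (@idmx R).
Proof. move=> p q; exists p.+1 => N hN; by rewrite AX. Qed.

Lemma XA_mx : mxmul_eq Xinv A (@idmx R).
Proof.
move=> p q; exists p.+1 => N hN.
set n := maxn N q.+1.
have hpn : (p < n)%N by apply: leq_trans hN (leq_maxl _ _).
have hqn : (q < n)%N by exact: leq_maxr.
pose Am : 'M[R]_n := \matrix_(i, j) A i j.
pose Xm : 'M[R]_n := \matrix_(i, j) Xinv i j.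
have H1 : Am *m Xm = 1%:M.
  apply/matrixP => i j; rewrite !mxE; under eq_bigr => k _ do rewrite !mxE.
  by rewrite AX.
have := congr1 (fun B : 'M[R]_n => B (Ordinal hpn) (Ordinal hqn)) (mulmx1C H1).
rewrite !mxE /= /idmx => <-.
rewrite (sum_widen (fun k => Xinv p k * A k q) (leq_maxl N q.+1)).
apply: eq_bigr => k _; rewrite !mxE; case: ifP => // /negbT; rewrite -leqNgt => h.
by rewrite Xinv_up ?mul0r //; apply: leq_trans hN h.
Qed.

Lemma AXapp N y p : (p < N)%N -> app N A (app N Xinv y) p = y p.
Proof.
move=> hp; rewrite /app (sum_mul_swap _ _ (fun k => A p k) (fun k r => Xinv k r) y).
rewrite (eq_bigr (fun r : 'I_N => (p == r)%:R * y r)); first exact: sum_delta.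
by move=> r _; rewrite AX.
Qed.

Lemma Xinv_low : forall p q, (p < q)%N -> Xinv p q = 0.
Proof. exact: Xinv_up. Qed.
End Inv.

Lemma Ak_up k p q : (p < q)%N -> Ak k p q = 0.
Proof.
move=> h; rewrite /Ak ifF; last by apply/negbTE; rewrite -leqNgt; apply: blk_mono; exact: ltnW.
by case: eqP => // E; rewrite E ltnn in h.
Qed.

Lemma Ak_d k p : Ak k p p = 1.
Proof. by rewrite /Ak ltnn eqxx. Qed.

Lemma LB_ge0 : 0 <= LB.
Proof.
rewrite /LB; apply: addr_ge0 => //; apply: mulr_ge0 => //; apply: mulr_ge0; last exact: ler0n.
apply: mulr_ge0; first exact: sqr_ge0.
by apply: divr_ge0; [exact: ler0n | exact: sqr_ge0].
Qed.

Lemma LTapp N z p : (p < N)%N -> app N L (app N T z) p = z p.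
Proof.
move=> hp; rewrite /app (sum_mul_swap _ _ (fun k => L p k) (fun k r => T k r) z).
rewrite (eq_bigr (fun r : 'I_N => (p == r)%:R * z r)); first exact: sum_delta.
move=> r _; rewrite (mxsec _ HLT) // => k hk.
by apply: (ltri HLlow Ldiag'); apply: leq_trans hp hk.
Qed.

Lemma sq_Xinv k N y : 2 * LB * Ek k <= 1 / 2 ->
  sq N (app N (Xinv (Ak k)) y) <= 4 * LB * sq N y.
Proof.
move=> hE.
set z := app N (Xinv (Ak k)) y.
have E1 : sq N z = sq N (app N L (fun p => y p + app N (mxdiff T (Ak k)) z p)).
  apply: eq_sq => p hp; rewrite -(LTapp z hp); apply: eq_app => r hr.
  rewrite -(AXapp (@Ak_up k) (@Ak_d k) y hr) -/z /app -big_split /=.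
  apply: eq_bigr => q _; rewrite /mxdiff; ring.
have h1 := sq_L N (fun p => y p + app N (mxdiff T (Ak k)) z p).
have h2 := sq_add2 N y (app N (mxdiff T (Ak k)) z).
have h3 := sq_E k N z.
have L0 := LB_ge0.
have y0 := sq_ge0 N y.
have z0 := sq_ge0 N z.
have h4 : sq N z <= 2 * LB * sq N y + (2 * LB * Ek k) * sq N z.
  rewrite E1; apply: le_trans h1 _.
  apply: le_trans (ler_wpM2l L0 h2) _.
  apply: le_trans (ler_wpM2l L0 (lerD (lexx (2 * sq N y)) (ler_wpM2l (ler0n _ 2) h3))) _.
  rewrite -E1 le_eqVlt; apply/orP; left; apply/eqP; ring.
have h5 : (2 * LB * Ek k) * sq N z <= 1 / 2 * sq N z by apply: ler_wpM2r.
lra.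
Qed.

Lemma le_sqS (x : R) : 0 <= x -> x <= (x + 1) ^+ 2.
Proof.
move=> h; rewrite -subr_ge0.
have -> : (x + 1) ^+ 2 - x = x ^+ 2 + x + 1 by ring.
by rewrite !addr_ge0 // sqr_ge0.
Qed.

Lemma natarith (a cc bq X Y b : nat) : (a <= cc + b -> bq + Y < a -> b + X <= Y -> bq + X < cc)%N.
Proof. lia. Qed.

Lemma main_sec : exists K : R, forall eps : R, 0 < eps ->
    exists (b : nat) (Leps Leps_inv : mx R),
      [/\ blk_lower nb Leps_inv /\ blk_unit_diag nb Leps_inv,
          inB d b Leps_inv /\ blk_band nb b Leps_inv,
          opnorm_le (mxdiff T Leps_inv) eps,
          mxmul_eq Leps Leps_inv (@idmx R) /\ mxmul_eq Leps_inv Leps (@idmx R) &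
          exists c1 c2 : R, [/\ opnorm_le Leps c1, opnorm_le Leps_inv c2 & c1 + c2 <= K]].
Proof.
exists ((4 * LB + 1) + (Ab + 1)) => eps e0.
have L0 := LB_ge0.
have A00 := A0_ge0.
case/andP: sg_bounds => s0 s1.
set B := 2 * A0 / (1 - sg) ^+ 2.
have B0 : 0 <= B by rewrite /B divr_ge0 ?sqr_ge0 // mulr_ge0.
set m := Num.min (eps ^+ 2) (1 / (4 * LB + 1)).
have m0 : 0 < m by rewrite lt_min exprn_gt0 //= divr_gt0 // ltr_wpDl // mulr_ge0.
have d0 : 0 < m / (B + 1) by rewrite divr_gt0 // ltr_wpDl.
have s2 : 0 <= sg ^+ 2 < 1.
  apply/andP; split; first exact: sqr_ge0.
  by rewrite expr2; apply: (@lt_le_trans _ _ (sg * 1)); [rewrite ltr_pM2l //; exact: lt_le_trans s0 (lexx _) | rewrite mulr1 ltW].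
  all: idtac.
have [k Hk] := small_pow s2 d0.
have HE : Ek k <= m.
  have -> : Ek k = B * (sg ^+ 2) ^+ k.
    rewrite /Ek /B -exprM mulnC exprM expr_div_n; field.
    by apply: lt0r_neq0; rewrite subr_gt0.
  apply: le_trans (ler_wpM2l B0 Hk) _.
  rewrite mulrCA; apply: ler_piMr; first exact: ltW.
  by rewrite ler_pdivrMr ?ltr_wpDl // mul1r lerDl.
have HE1 : Ek k <= eps ^+ 2 by apply: le_trans HE _; rewrite ge_min lexx.
have HE2 : 2 * LB * Ek k <= 1 / 2.
  have : Ek k <= 1 / (4 * LB + 1) by apply: le_trans HE _; rewrite ge_min lexx orbT.
  have p1 : 0 < 4 * LB + 1 by rewrite ltr_wpDl // mulr_ge0.
  rewrite ler_pdivlMr // mul1r => h.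
  have Ek0 : 0 <= Ek k.
    by rewrite /Ek mulr_ge0 ?sqr_ge0 // mulr_ge0.
  have -> : 2 * LB * Ek k = (4 * LB * Ek k) / 2 by field.
  rewrite ler_pdivrMr // mulVf ?pnatr_eq0 //.
  apply: le_trans h; rewrite [Ek k * _]mulrDr [Ek k * 1]mulr1 [Ek k * _]mulrC lerDl //.
exists (k * b0)%N, (Xinv (Ak k)), (Ak k); split.
- split.
  + move=> i j p q hij; rewrite !inblkE => /eqP hp /eqP hq; rewrite /Ak hp hq ifF; last first.
      by apply/negbTE; rewrite -leqNgt ltnW.
    case: eqP => // E; rewrite E hq in hp; by rewrite hp ltnn in hij.
  + move=> i p q; rewrite !inblkE => /eqP hp /eqP hq; by rewrite /Ak hp hq ltnn.
- split.
  + move=> p q hd; rewrite /Ak; case: ifP => h; last first.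
      case: eqP => // E; rewrite E Hd0 in hd; by rewrite ltNge ler0n in hd.
    rewrite big1 ?oppr0 // => c _.
    case: (eqVneq (M p c) 0) => [->|hM]; first by rewrite mul0r.
    have hpc : d p c <= b0%:R by rewrite leNgt; apply/negP => /HMd; apply/eqP.
    rewrite big1 ?mulr0 // => mm _; rewrite Bp_d // ltNge; apply/negP => H.
    have := Hdtri p c q; rewrite leNgt => /negP; apply.
    apply: le_lt_trans (lerD hpc H) _; apply: le_lt_trans hd.
    by rewrite -natrD ler_nat -mulSn; apply: leq_mul => //; exact: ltn_ord mm.
  + move=> i j p q hb; rewrite !inblkE => /eqP hp /eqP hq; rewrite /Ak; case: ifP => h; last first.
      case: eqP => // E; rewrite E hq in hp; move: hb; by rewrite hp subnn ltn0.
    rewrite big1 ?oppr0 // => c _.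
    case: (eqVneq (M p c) 0) => [->|hM]; first by rewrite mul0r.
    have hpc : ~~ ((b0 < blk p - blk c) || (b0 < blk c - blk p))%N.
      by apply/negP => /HMb; apply/eqP.
    rewrite big1 ?mulr0 // => mm _; rewrite Bp_blk //; apply/orP; left.
    have hmk : (b0 + mm * b0 <= k * b0)%N by rewrite -mulSn; apply: leq_mul => //; exact: ltn_ord mm.
    rewrite -hp -hq in hb.
    have e1 : (blk p <= blk c + b0)%N.
      by move: hpc; rewrite negb_or -!leqNgt leq_subLR => /andP [H _].
    have e2 : (blk q + k * b0 < blk p)%N.
      case/orP: hb; first by rewrite ltn_subRL.
      by rewrite (_ : blk q - blk p = 0)%N ?ltn0 //; apply/eqP; rewrite subn_eq0 ltnW.
    exact: (natarith e1 e2 hmk).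
- apply: opnorm_of_sq; first exact: ltW.
  move=> N x; apply: le_trans (sq_E k N x) _; apply: ler_wpM2r; [exact: sq_ge0 | exact: HE1].
- by split; [exact: XA_mx (@Ak_up k) (@Ak_d k) | exact: AX_mx (@Ak_up k) (@Ak_d k)].
exists (4 * LB + 1), (Ab + 1); split => //.
- apply: opnorm_of_sq; first by rewrite addr_ge0 // mulr_ge0.
  move=> N x; apply: le_trans (sq_Xinv N x HE2) _; apply: ler_wpM2r; first exact: sq_ge0.
  have h : 0 <= 4 * LB by rewrite mulr_ge0.
  exact: le_sqS.
- apply: opnorm_of_sq.
    rewrite addr_ge0 // /Ab addr_ge0 // mulr_ge0 // divr_ge0 // sqr_ge0 //.
  move=> N x; apply: le_trans (sq_Ak k N x) _; apply: ler_wpM2r; first exact: sq_ge0.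
  have h : 0 <= Ab by rewrite /Ab addr_ge0 // mulr_ge0 // divr_ge0 // sqr_ge0 //.
  exact: le_sqS.
Qed.
End Main.

Unset Implicit Arguments.

Theorem lemma3p9 (R : realType) (M L U Linv : mx R) (nb : nat -> nat)
  (d : nat -> nat -> R) (b0 : nat) :
  bounded M -> elliptic M ->
  block_structure nb -> blk_band nb b0 M ->
  is_metric d -> inB d b0 M ->
  (* M = L U, block LU factorization *)
  blk_lower nb L -> blk_unit_diag nb L -> blk_upper nb U -> mxmul_eq L U M ->
  (* Linv = L^{-1} (the block-lower triangular inverse of L) *)
  blk_lower nb Linv -> mxmul_eq L Linv (@idmx R) -> mxmul_eq Linv L (@idmx R) ->
  exists K : R, forall eps : R, 0 < eps ->
    exists (b : nat) (Leps Leps_inv : mx R),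
      [/\ blk_lower nb Leps_inv /\ blk_unit_diag nb Leps_inv,
          inB d b Leps_inv /\ blk_band nb b Leps_inv,
          opnorm_le (mxdiff Linv Leps_inv) eps,
          mxmul_eq Leps Leps_inv (@idmx R) /\ mxmul_eq Leps_inv Leps (@idmx R) &
          exists c1 c2 : R, [/\ opnorm_le Leps c1, opnorm_le Leps_inv c2 & c1 + c2 <= K]].
Proof.
move=> [c0 [c00 Hc0]] [C [HC Hell]] Hnb HMband [Hd0' [Hdeq [_ Hdtri]]] HMd
  HLlow HLdiag HUup HLU HTlow HLT HTL.
have HCL : C < c0 + C + 1 by rewrite -addrA ltr_wpDl // ltrDl ltr01.
have L0 : 0 <= c0 + C + 1 by rewrite !addr_ge0 // ltW.
have Hbnd : forall (m n : nat) (x : nat -> R),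
    \sum_(i < m) (\sum_(j < n) M i j * x j) ^+ 2 <= (c0 + C + 1) ^+ 2 * \sum_(j < n) x j ^+ 2.
  move=> m n x; apply: le_trans (Hc0 m n x) _; apply: ler_wpM2r.
    by apply: sumr_ge0 => j _; exact: sqr_ge0.
  rewrite ler_sqr ?nnegrE //; rewrite -addrA lerDl addr_ge0 // ltW //.
have HMb : forall p q, ((b0 < blk Hnb p - blk Hnb q) || (b0 < blk Hnb q - blk Hnb p))%N -> M p q = 0.
  by move=> p q h; apply: (HMband _ _ _ _ h (blkP Hnb p) (blkP Hnb q)).
have Hd0 : forall p, d p p = 0 by move=> p; apply/Hdeq.
exact: (@main_sec R nb Hnb M d b0 (c0 + C + 1) C HC HCL Hbnd Hell HMb HMd Hd0 Hdtri
   L U Linv HLlow HLdiag HUup HLU HTlow HLT HTL).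
Qed.
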